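(* Let $u,u',v\in\mathbb{Z}^2$ with $u<v$ and $u'<v$ (strictly in both coordinates), and let $\lambda\in(0,1)$. Then $\pi(\lambda;u,v)\cap R=\pi(\lambda;u',v)\cap R$, where $R=R_{u+\mathbf{e}_+,v}\cap R_{u'+\mathbf{e}_+,v}$.
   Context: Fix $p\in(0,1)$; bulk weights $(\omega_x)_{x\in\mathbb{Z}^2}$ i.i.d. with $\mathbb{P}(\omega_x=k)=p(1-p)^k$, $k\ge0$. $\mathbf{e}_1=(1,0),\mathbf{e}_2=(0,1),\mathbf{e}_+=(1,1)$; $R_{u,v}=[u_1,v_1]\times[u_2,v_2]$; $H_x=\mathbb{R}\times\{x_2\}$, $V_x=\{x_1\}\times\mathbb{R}$. Directed paths use steps $\mathbf{e}_1,\mathbf{e}_2$; $T(x,y)$ is the maximal weight $\sum_{z\in\gamma}\omega_z$ over directed paths from $x$ to $y$. Boundary weights for $\lambda\in(0,1)$: let $q(\lambda)=\frac{p\lambda+p\sqrt{(1-p)\lambda(1-\lambda)}}{1-p+p\lambda+2\sqrt{(1-p)\lambda(1-\lambda)}}$, $p_V=1-\frac{1-p}{1-q(\lambda)}$. For a base vertex $u_0$, take $(\omega^V_{u_0+j\mathbf{e}_2}(\lambda))_{j\in\mathbb{Z}}$ i.i.d. geometric with parameter $p_V$ independent of the bulk, set $L(u_0)=0$, $L(u_0+j\mathbf{e}_2)-L(u_0+(j-1)\mathbf{e}_2)=\omega^V_{u_0+j\mathbf{e}_2}(\lambda)$, for $x\in u_0+\mathbb{Z}_{>0}\times\mathbb{Z}$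 let $L(x)=\sup_{j\le x_2-(u_0)_2}[L(u_0+j\mathbf{e}_2)+T(u_0+\mathbf{e}_1+j\mathbf{e}_2,x)]$, and $\omega^H_x(\lambda)=L(x)-L(x-\mathbf{e}_1)$, $\omega^V_x(\lambda)=L(x)-L(x-\mathbf{e}_2)$. The law of $(\omega_x,\omega^H_x(\lambda),\omega^V_x(\lambda))$ converges as $u_0=(-m,-m)$, $m\to\infty$, to a law on all of $\mathbb{Z}^2$ whose restriction to each quadrant $u_0+\mathbb{Z}_{\ge0}^2$ agrees with the construction based at $u_0$; we work under this full-plane law. For a directed path $\gamma$ from $x$ to $y$, $T(\lambda;\gamma)=\sum_{z\in\gamma\cap H_x\setminus\{x\}}\omega^H_z(\lambda)+\sum_{z\in\gamma\cap V_x\setminus\{x\}}\omega^V_z(\lambda)+\sum_{z\in\gamma\cap R_{x+\mathbf{e}_+,y}}\omega_z$; $T(\lambda;x,y)$ is the maximum over directed paths from $x$ to $y$; maximizers are $\lambda$-geodesics, and $\pi(\lambda;x,y)$ is the set of vertices on some $\lambda$-geodesic from $x$ to $y$. *)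

(* Defs.v *)
From Stdlib Require Import ZArith List Reals.
Import ListNotations.
Open Scope bool_scope.
Open Scope Z_scope.

Definition point : Type := (Z * Z)%type.
Definition padd (a b : point) : point := (fst a + fst b, snd a + snd b).
Definition psub (a b : point) : point := (fst a - fst b, snd a - snd b).
Definition e1 : point := (1, 0).
Definition e2 : point := (0, 1).
Definition eplus : point := (1, 1).

Definition plt (u v : point) : Prop := fst u < fst v /\ snd u < snd v.

Definition in_rect (a b z : point) : Prop :=
  fst a <= fst z <= fst b /\ snd a <= snd z <= snd b.

Fixpoint steps_ok (l : list point) : Prop :=
  match l with
  | a :: ((b :: _) as t) => (b = padd a e1 \/ b = padd a e2) /\ steps_ok t
  | _ => True
  end.

Definition dpath (x y : point) (g : list point) : Prop :=
  hd_error g = Some x /\ last g x = y /\ steps_ok g.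

(** Environment: bulk weights w, boundary weights wH = omega^H(lambda),
    wV = omega^V(lambda). *)

(** Contribution of vertex z to T(lambda; gamma) for a path gamma from x to y:
    omega^H_z on H_x \ {x}, omega^V_z on V_x \ {x}, omega_z on R_{x+e+,y}. *)
Definition lam_wt (w : point -> nat) (wH wV : point -> Z) (x y z : point) : Z :=
  (if (snd z =? snd x) && negb ((fst z =? fst x) && (snd z =? snd x)) then wH z else 0)
  + (if (fst z =? fst x) && negb ((fst z =? fst x) && (snd z =? snd x)) then wV z else 0)
  + (if (fst x + 1 <=? fst z) && (fst z <=? fst y)
        && (snd x + 1 <=? snd z) && (snd z <=? snd y) then Z.of_nat (w z) else 0).

Definition lam_path_weight (w : point -> nat) (wH wV : point -> Z)
  (x y : point) (g : list point) : Z :=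
  fold_right Z.add 0 (map (lam_wt w wH wV x y) g).

Definition lam_geodesic (w : point -> nat) (wH wV : point -> Z)
  (x y : point) (g : list point) : Prop :=
  dpath x y g /\
  forall g', dpath x y g' ->
    lam_path_weight w wH wV x y g' <= lam_path_weight w wH wV x y g.

Definition lam_pi (w : point -> nat) (wH wV : point -> Z) (x y z : point) : Prop :=
  exists g, lam_geodesic w wH wV x y g /\ In z g.

(** Almost-sure structural property of the full-plane law of
    (omega, omega^H(lambda), omega^V(lambda)): there is a (random) potential L
    on Z^2 whose horizontal/vertical increments are omega^H, omega^V and which
    satisfies the last-passage recursion L(x) = omega_x + max(L(x-e1), L(x-e2))
    (this is what the quadrant construction L(x) = sup_j[...] yields at every
    vertex strictly right of the base column, for every base u0). *)
Definition full_plane_env (w : point -> nat) (wH wV : point -> Z) : Prop :=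
  exists L : point -> Z,
    forall x : point,
      wH x = L x - L (psub x e1) /\
      wV x = L x - L (psub x e2) /\
      L x = Z.of_nat (w x) + Z.max (L (psub x e1)) (L (psub x e2)).

(* Main.v *)
Require Import Defs.
From Stdlib Require Import ZArith List Reals Lia.
Import ListNotations.
Open Scope Z_scope.

Definition le2 (a b : point) := fst a <= fst b /\ snd a <= snd b.
Definition stp (a b : point) := b = padd a e1 \/ b = padd a e2.
Definition HLp (w : point -> nat) (wH wV L : point -> Z) :=
  forall x, wH x = L x - L (psub x e1) /\ wV x = L x - L (psub x e2) /\
      L x = Z.of_nat (w x) + Z.max (L (psub x e1)) (L (psub x e2)).
Definition dz w wH wV (L : point -> Z) x y (a b : point) :=
  L b - L a - lam_wt w wH wV x y b.
Definition G (L : point -> Z) (x a b : point) : Prop :=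
  fst b = fst x \/ snd b = snd x \/ L a = Z.max (L (psub b e1)) (L (psub b e2)).

Lemma step_dz w wH wV L (HL : HLp w wH wV L) x y a b :
  stp a b -> le2 x a -> le2 b y ->
  0 <= dz w wH wV L x y a b /\ (dz w wH wV L x y a b = 0 <-> G L x a b).
Proof.
  destruct x as [x1 x2], y as [y1 y2], a as [a1 a2], b as [b1 b2].
  intros Hs Hxa Hby. unfold le2 in *; simpl in *.
  destruct (HL (b1, b2)) as (H1 & H2 & H3).
  unfold G, dz, lam_wt, stp, padd, psub in *; simpl in *.
  destruct Hs as [Hs | Hs]; injection Hs; intros; subst b1 b2;
  rewrite ?Z.add_0_r, ?Z.sub_0_r, ?Z.add_simpl_r in *;
  repeat match goal with
  | |- context [Z.eqb ?p ?q] => destruct (Z.eqb_spec p q)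
  | |- context [Z.leb ?p ?q] => destruct (Z.leb_spec p q) end; simpl;
  split; try split; intros; try lia.
Qed.
Fixpoint Dsum w wH wV L x y (a : point) (l : list point) : Z :=
  match l with [] => 0 | b :: t => dz w wH wV L x y a b + Dsum w wH wV L x y b t end.
Fixpoint allG L x (a : point) (l : list point) : Prop :=
  match l with [] => True | b :: t => G L x a b /\ allG L x b t end.
Definition Ist (L : point -> Z) (a b : point) : Prop :=
  L a = Z.max (L (psub b e1)) (L (psub b e2)).
Fixpoint allI L (a : point) (l : list point) : Prop :=
  match l with [] => True | b :: t => Ist L a b /\ allI L b t end.

Lemma last_cons (b : point) t a : last (b :: t) a = last t b.
Proof.
  revert b a. induction t as [|c t IH]; intros b a; [reflexivity|].
  change (last (c :: t) a = last (c :: t) b). rewrite !IH. reflexivity.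
Qed.

Lemma steps_le : forall l a, steps_ok (a :: l) -> le2 a (last l a).
Proof.
  induction l as [|b t IH]; intros a H.
  - simpl; unfold le2; lia.
  - destruct H as [Hs H]. rewrite last_cons. specialize (IH b H).
    unfold le2, padd in *; destruct Hs; subst; simpl in *; lia.
Qed.

Lemma tele w wH wV L (HL : HLp w wH wV L) x y :
  forall l a, steps_ok (a :: l) -> le2 x a -> le2 (last l a) y ->
  fold_right Z.add 0 (map (lam_wt w wH wV x y) l) = L (last l a) - L a - Dsum w wH wV L x y a l
  /\ 0 <= Dsum w wH wV L x y a l /\ (Dsum w wH wV L x y a l = 0 <-> allG L x a l).
Proof.
  induction l as [|b t IH]; intros a Hs Hxa Hy.
  - simpl. repeat split; lia.
  - destruct Hs as [Hst Hs]. rewrite last_cons in *.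
    assert (Hab : le2 a b) by (unfold le2, padd in *; destruct Hst; subst; simpl; lia).
    assert (Hxb : le2 x b) by (unfold le2 in *; lia).
    assert (Hby : le2 b y) by (pose proof (steps_le t b Hs); unfold le2 in *; lia).
    destruct (step_dz w wH wV L HL x y a b Hst Hxa Hby) as [D1 D2].
    destruct (IH b Hs Hxb Hy) as (E1 & E2 & E3).
    simpl. rewrite E1. unfold dz in *.
    split; [lia|]. split; [lia|].
    split.
    + intro H. split; [apply D2; lia | apply E3; lia].
    + intros [HG HA]. apply D2 in HG. apply E3 in HA. lia.
Qed.

Lemma lam_wt_self w wH wV x y : lam_wt w wH wV x y x = 0.
Proof.
  unfold lam_wt. rewrite !Z.eqb_refl. simpl.
  replace (fst x + 1 <=? fst x) with false by (symmetry; apply Z.leb_gt; lia).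
  reflexivity.
Qed.

Lemma weight_eq w wH wV L (HL : HLp w wH wV L) x y l :
  dpath x y (x :: l) ->
  lam_path_weight w wH wV x y (x :: l) = L y - L x - Dsum w wH wV L x y x l
  /\ 0 <= Dsum w wH wV L x y x l /\ (Dsum w wH wV L x y x l = 0 <-> allG L x x l).
Proof.
  intros (_ & Hl & Hs). simpl in Hl.
  assert (Hy : last l x = y) by (destruct l; auto).
  destruct (tele w wH wV L HL x y l x Hs) as (E1 & E2 & E3).
  - unfold le2; lia.
  - rewrite Hy; unfold le2; lia.
  - unfold lam_path_weight. simpl. rewrite lam_wt_self, E1, Hy. auto.
Qed.

Lemma steps_app : forall l1 a l2, steps_ok (a :: l1) -> steps_ok (last l1 a :: l2) ->
  steps_ok (a :: l1 ++ l2).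
Proof.
  induction l1 as [|b t IH]; intros a l2 H1 H2.
  - exact H2.
  - destruct H1 as [Hs H1]. rewrite last_cons in H2. simpl app.
    change (steps_ok (a :: b :: t ++ l2)) with ((b = padd a e1 \/ b = padd a e2) /\ steps_ok (b :: t ++ l2)).
    split; auto.
Qed.

Lemma allG_app L x : forall l1 a l2, allG L x a l1 -> allG L x (last l1 a) l2 ->
  allG L x a (l1 ++ l2).
Proof.
  induction l1 as [|b t IH]; intros a l2 H1 H2.
  - exact H2.
  - destruct H1 as [Hs H1]. rewrite last_cons in H2. simpl. split; auto.
Qed.

Lemma last_app : forall (l1 l2 : list point) a, last (l1 ++ l2) a = last l2 (last l1 a).
Proof.
  induction l1 as [|b t IH]; intros l2 a.
  - reflexivity.
  - simpl app. rewrite !last_cons. apply IH.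
Qed.

Lemma opt_path w wH wV L (HL : HLp w wH wV L) x :
  forall n z, le2 x z -> Z.to_nat ((fst z - fst x) + (snd z - snd x)) = n ->
  exists l, steps_ok (x :: l) /\ last l x = z /\ allG L x x l.
Proof.
  induction n as [n IH] using lt_wf_ind. intros [z1 z2] Hxz Hn.
  destruct x as [x1 x2]. unfold le2 in Hxz; simpl in *.
  assert (Hext : forall p, le2 (x1, x2) p -> stp p (z1, z2) -> G L (x1,x2) p (z1,z2) ->
     exists l, steps_ok ((x1,x2) :: l) /\ last l (x1,x2) = (z1,z2) /\ allG L (x1,x2) (x1,x2) l).
  { intros [p1 p2] Hp Hst HG.
    assert (Hlt : (Z.to_nat ((p1 - x1) + (p2 - x2)) < n)%nat).
    { unfold stp, padd in Hst; simpl in Hst. unfold le2 in Hp; simpl in Hp.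
      destruct Hst as [H|H]; injection H; intros; subst; lia. }
    destruct (IH _ Hlt (p1,p2) Hp eq_refl) as (l & H1 & H2 & H3).
    exists (l ++ [(z1,z2)]). split; [|split].
    - apply steps_app; auto. rewrite H2. simpl. auto.
    - rewrite last_app. reflexivity.
    - apply allG_app; auto. rewrite H2. simpl. auto. }
  destruct (Z.eq_dec z1 x1) as [E1|E1]; destruct (Z.eq_dec z2 x2) as [E2|E2].
  - subst. exists []. simpl. auto.
  - apply (Hext (z1, z2 - 1)).
    + unfold le2; simpl; lia.
    + right. unfold padd; simpl. f_equal; lia.
    + left. simpl. auto.
  - apply (Hext (z1 - 1, z2)).
    + unfold le2; simpl; lia.
    + left. unfold padd; simpl. f_equal; lia.
    + right; left. simpl. auto.
  - destruct (Z.le_ge_cases (L (psub (z1,z2) e1)) (L (psub (z1,z2) e2))) as [C|C].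
    + apply (Hext (z1, z2 - 1)).
      * unfold le2; simpl; lia.
      * right. unfold padd; simpl. f_equal; lia.
      * right; right. unfold psub in *; simpl in *. repeat rewrite Z.sub_0_r in *. lia.
    + apply (Hext (z1 - 1, z2)).
      * unfold le2; simpl; lia.
      * left. unfold padd; simpl. f_equal; lia.
      * right; right. unfold psub in *; simpl in *. repeat rewrite Z.sub_0_r in *. lia.
Qed.

Lemma suffix L x (z : point) g2 : forall g1 a l, a :: l = g1 ++ z :: g2 ->
  steps_ok (a :: l) -> allG L x a l ->
  steps_ok (z :: g2) /\ allG L x z g2 /\ last l a = last g2 z.
Proof.
  induction g1 as [|c g1 IH]; intros a l E Hs HA.
  - simpl in E. injection E; intros; subst. auto.
  - simpl in E. injection E; intros El Ea; subst c.
    destruct g1 as [|d g1].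
    + simpl in El. subst l. destruct Hs as [_ Hs]. destruct HA as [_ HA].
      rewrite last_cons. auto.
    + simpl in El. subst l. destruct Hs as [_ Hs]. destruct HA as [_ HA].
      rewrite last_cons. apply (IH d); auto.
Qed.

Lemma allG_allI L x : forall l z, steps_ok (z :: l) -> fst x < fst z -> snd x < snd z ->
  (allG L x z l <-> allI L z l).
Proof.
  induction l as [|b t IH]; intros z Hs H1 H2; [simpl; tauto|].
  destruct Hs as [Hst Hs].
  assert (fst x < fst b /\ snd x < snd b) as [B1 B2]
    by (unfold padd in Hst; destruct Hst; subst; simpl; lia).
  simpl. rewrite (IH b Hs B1 B2). unfold G, Ist. split.
  - intros [[C|[C|C]] D]; [lia|lia|auto].
  - intros [C D]; auto.
Qed.

Definition Pz L (v z : point) : Prop :=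
  exists l, steps_ok (z :: l) /\ last l z = v /\ allI L z l.

Lemma last_in : forall (t : list point) b a, In (last (b :: t) a) (b :: t).
Proof.
  induction t as [|c t IH]; intros b a; [simpl; auto|].
  rewrite last_cons. right. apply IH.
Qed.

Lemma charac w wH wV L (HL : HLp w wH wV L) (x v z : point) :
  fst x < fst z <= fst v -> snd x < snd z <= snd v ->
  (lam_pi w wH wV x v z <-> Pz L v z).
Proof.
  intros Z1 Z2.
  destruct (opt_path w wH wV L HL x _ v ltac:(unfold le2; lia) eq_refl) as (lo & Ho1 & Ho2 & Ho3).
  assert (Hdo : dpath x v (x :: lo)) by (split; [reflexivity | split; [rewrite last_cons; auto| auto]]).
  destruct (weight_eq w wH wV L HL x v lo Hdo) as (Wo & _ & Wo3).
  assert (Wo' : lam_path_weight w wH wV x v (x :: lo) = L v - L x) by (rewrite Wo; rewrite (proj2 Wo3 Ho3); lia).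
  split.
  - intros (g & [Hd Hopt] & Hin).
    destruct g as [|x0 l]; [destruct Hd as [Hd _]; discriminate|].
    assert (x0 = x) by (destruct Hd as [Hd _]; simpl in Hd; congruence). subst x0.
    destruct (weight_eq w wH wV L HL x v l Hd) as (W1 & W2 & W3).
    specialize (Hopt _ Hdo). rewrite Wo', W1 in Hopt.
    assert (HA : allG L x x l) by (apply W3; lia).
    destruct (in_split _ _ Hin) as (g1 & g2 & E).
    destruct Hd as (_ & Hl & Hs).
    destruct (suffix L x z g2 g1 x l E Hs HA) as (S1 & S2 & S3).
    exists g2. split; [auto|split].
    + rewrite <- S3. rewrite <- Hl. rewrite last_cons. reflexivity.
    + rewrite <- (allG_allI L x g2 z S1) by lia. exact S2.
  - intros (l2 & P1 & P2 & P3).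
    destruct (opt_path w wH wV L HL x _ z ltac:(unfold le2; lia) eq_refl) as (l1 & H1 & H2 & H3).
    assert (Hd : dpath x v (x :: l1 ++ l2)).
    { split; [reflexivity|split].
      - rewrite last_cons, last_app, H2. auto.
      - apply steps_app; auto. rewrite H2; auto. }
    exists (x :: l1 ++ l2). split; [split; [exact Hd|]|].
    + intros g' Hd'.
      destruct g' as [|x0 l']; [destruct Hd' as [Hd' _]; discriminate|].
      assert (x0 = x) by (destruct Hd' as [Hd' _]; simpl in Hd'; congruence). subst x0.
      destruct (weight_eq w wH wV L HL x v l' Hd') as (W1 & W2 & W3).
      destruct (weight_eq w wH wV L HL x v (l1 ++ l2) Hd) as (V1 & V2 & V3).
      assert (HA : allG L x x (l1 ++ l2)).
      { apply allG_app; auto. rewrite H2. rewrite (allG_allI L x l2 z P1) by lia. exact P3. }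
      rewrite W1, V1, (proj2 V3 HA). lia.
    + right. apply in_or_app. left.
      destruct l1 as [|b t]; [simpl in H2; subst z; lia|].
      rewrite <- H2. apply last_in.
Qed.

Theorem lemma3p5 (lam : R) (Hlam : (0 < lam < 1)%R)
  (w : point -> nat) (wH wV : point -> Z)
  (Henv : full_plane_env w wH wV)
  (u u' v : point) (Huv : plt u v) (Hu'v : plt u' v) :
  forall z : point,
    in_rect (padd u eplus) v z -> in_rect (padd u' eplus) v z ->
    (lam_pi w wH wV u v z <-> lam_pi w wH wV u' v z).
Proof.
  intros z H1 H2. destruct Henv as [L HL].
  assert (HL' : HLp w wH wV L) by exact HL.
  unfold in_rect, padd, eplus in *; simpl in *.
  rewrite (charac w wH wV L HL' u v z) by lia.
  rewrite (charac w wH wV L HL' u' v z) by lia.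
  tauto.
Qed.
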